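(* Let $(A,\circ,[\cdot,\cdot],\mathcal{B})$ be a finite-dimensional quadratic dual pre-Poisson algebra and let $\phi:A\to A^*$ be the linear isomorphism $\langle\phi(x),y\rangle=\mathcal{B}(x,y)$. Let $r\in A\otimes A$ be symmetric. Then $r$ is a solution of the permutative-Leibniz Yang–Baxter equation if and only if $P_r:=\tilde r\circ\phi:A\to A$ is a Rota–Baxter operator on $(A,\circ,[\cdot,\cdot])$.
   Context: Field $\mathbb{F}$ of characteristic $0$. Dual pre-Poisson algebra: $x\circ(y\circ z)=(x\circ y)\circ z=(y\circ x)\circ z$; $[x,[y,z]]=[[x,y],z]+[y,[x,z]]$; $[x,y\circ z]=[x,y]\circ z+y\circ[x,z]$; $[x\circ y,z]=x\circ[y,z]+y\circ[x,z]$; $[x,y]\circ z=-[y,x]\circ z$. Quadratic: $\mathcal{B}$ is a nondegenerate skew-symmetric bilinear form with $\mathcal{B}(x\circ y,z)=\mathcal{B}(x,y\circ z-z\circ y)$ and $\mathcal{B}([x,y],z)=\mathcal{B}(x,[y,z]+[z,y])$. $\tilde r:A^*\to A$ is $\langle\tilde r(u^* ),v^*\rangle=\langle r,u^*\otimes v^*\rangle$. A Rota–Baxter operator is a linear $P:A\to A$ with $P(x)\circ P(y)=P(P(x)\circ y+x\circ P(y))$ and $[P(x),P(y)]=P([P(x),y]+[x,P(y)])$. PLYBE: with $x\blacksquare y=x\circ y-y\circ x$, $x\square y=[x,y]+[y,x]$, for $r=\sum_i a_i\otimes b_i$, $\mathbf{P}(r)=\sum_{i,j}\big(a_i\otimes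 a_j\otimes b_i\circ b_j-a_i\otimes b_i\circ a_j\otimes b_j+a_i\blacksquare a_j\otimes b_j\otimes b_i\big)$, $\mathbf{L}(r)=\sum_{i,j}\big(a_i\otimes a_j\otimes[b_i,b_j]+a_i\otimes[b_i,a_j]\otimes b_j-a_i\square a_j\otimes b_i\otimes b_j\big)$; $r$ is a solution if $\mathbf{P}(r)=\mathbf{L}(r)=0$; symmetric means flip-invariant. *)

(* Defs.v *)
(* A finite-dimensional F-vector space A is modelled as 'rV[F]_n,
   its dual as 'rV[F]_n with the standard pairing, tensors by coordinates. *)
From mathcomp Require Import all_boot all_order all_algebra.
Set Implicit Arguments. Unset Strict Implicit. Unset Printing Implicit Defensive.
Import Order.TTheory GRing.Theory Num.Theory.
Local Open Scope ring_scope.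

Section Defs.
Variables (F : fieldType) (n : nat).
Local Notation A := 'rV[F]_n.

Definition evec (j : 'I_n) : A := delta_mx 0 j.

Definition pairing (u x : A) : F := \sum_(j < n) u 0 j * x 0 j.

Definition bilinear_map (W : lmodType F) (f : A -> A -> W) : Prop :=
  (forall (a : F) (x y z : A), f (a *: x + y) z = a *: f x z + f y z) /\
  (forall (a : F) (x y z : A), f x (a *: y + z) = a *: f x y + f x z).

Definition dual_pre_Poisson (circ br : A -> A -> A) : Prop :=
  bilinear_map circ /\ bilinear_map br /\
  (forall x y z, circ x (circ y z) = circ (circ x y) z) /\
  (forall x y z, circ (circ x y) z = circ (circ y x) z) /\
  (forall x y z, br x (br y z) = br (br x y) z + br y (br x z)) /\
  (forall x y z, br x (circ y z) = circ (br x y) z + circ y (br x z)) /\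
  (forall x y z, br (circ x y) z = circ x (br y z) + circ y (br x z)) /\
  (forall x y z, circ (br x y) z = - circ (br y x) z).

Definition quadratic (circ br : A -> A -> A) (B : A -> A -> F) : Prop :=
  bilinear_map (B : A -> A -> F^o) /\
  (forall x y, B x y = - B y x) /\
  (forall x, (forall y, B x y = 0) -> x = 0) /\
  (forall x y z, B (circ x y) z = B x (circ y z - circ z y)) /\
  (forall x y z, B (br x y) z = B x (br y z + br z y)).

Definition phiB (B : A -> A -> F) (x : A) : A := \row_(j < n) B x (evec j).

Definition tens2 (x y : A) : 'M[F]_n := \matrix_(i, j) (x 0 i * y 0 j).
Definition tens3 (x y z : A) : {ffun 'I_n * 'I_n * 'I_n -> F} :=
  [ffun ijk => x 0 ijk.1.1 * y 0 ijk.1.2 * z 0 ijk.2].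

(* r = \sum_i a_i (x) b_i, given by the list of pairs (a_i, b_i) *)
Definition tensor_of (s : seq (A * A)) : 'M[F]_n := \sum_(p <- s) tens2 p.1 p.2 .

Definition symmetric_tensor (s : seq (A * A)) : Prop :=
  \sum_(p <- s) tens2 p.1 p.2 = \sum_(p <- s) tens2 p.2 p.1.

(* rtilde : dual -> A, <rtilde(u), v> = <r, u (x) v>, i.e. rtilde(u) = sum_i <u,a_i> b_i *)
Definition rtilde (s : seq (A * A)) (u : A) : A := \sum_(p <- s) pairing u p.1 *: p.2.

Definition PLYBE_P (circ : A -> A -> A) (s : seq (A * A)) :=
  \sum_(p <- s) \sum_(q <- s)
    (tens3 p.1 q.1 (circ p.2 q.2) - tens3 p.1 (circ p.2 q.1) q.2
     + tens3 (circ p.1 q.1 - circ q.1 p.1) q.2 p.2).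

Definition PLYBE_L (br : A -> A -> A) (s : seq (A * A)) :=
  \sum_(p <- s) \sum_(q <- s)
    (tens3 p.1 q.1 (br p.2 q.2) + tens3 p.1 (br p.2 q.1) q.2
     - tens3 (br p.1 q.1 + br q.1 p.1) p.2 q.2).

Definition PLYBE_solution (circ br : A -> A -> A) (s : seq (A * A)) : Prop :=
  PLYBE_P circ s = 0 /\ PLYBE_L br s = 0.

Definition Rota_Baxter (circ br : A -> A -> A) (P : A -> A) : Prop :=
  (forall (a : F) (x y : A), P (a *: x + y) = a *: P x + P y) /\
  (forall x y, circ (P x) (P y) = P (circ (P x) y + circ x (P y))) /\
  (forall x y, br (P x) (P y) = P (br (P x) y + br x (P y))).

End Defs.

(* Main.v *)
Require Import Defs.
From mathcomp Require Import all_boot all_order all_algebra.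
From mathcomp Require Import ring.
Set Implicit Arguments. Unset Strict Implicit. Unset Printing Implicit Defensive.
Import Order.TTheory GRing.Theory Num.Theory.
Local Open Scope ring_scope.

Section Aux.
Variables (F : fieldType) (n : nat).
Local Notation A := 'rV[F]_n.

Section Bil.
Variables (W : lmodType F) (m : A -> A -> W) (Hm : bilinear_map m).

Lemma bl0 y : m 0 y = 0.
Proof. have e := Hm.1 1 0 0 y; rewrite !scale1r addr0 in e.
by apply: (addrI (m 0 y)); rewrite addr0 -e. Qed.
Lemma br0 y : m y 0 = 0.
Proof. have e := Hm.2 1 y 0 0; rewrite !scale1r addr0 in e.
by apply: (addrI (m y 0)); rewrite addr0 -e. Qed.
Lemma blD x y z : m (x + y) z = m x z + m y z.
Proof. by have := Hm.1 1 x y z; rewrite !scale1r. Qed.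
Lemma brD x y z : m z (x + y) = m z x + m z y.
Proof. by have := Hm.2 1 z x y; rewrite !scale1r. Qed.
Lemma blZ a x z : m (a *: x) z = a *: m x z.
Proof. by have := Hm.1 a x 0 z; rewrite !addr0 bl0 addr0. Qed.
Lemma brZ a x z : m z (a *: x) = a *: m z x.
Proof. by have := Hm.2 a z x 0; rewrite !addr0 br0 addr0. Qed.
Lemma blB x y z : m (x - y) z = m x z - m y z.
Proof. by rewrite blD -[- y]scaleN1r blZ scaleN1r. Qed.
Lemma brB x y z : m z (x - y) = m z x - m z y.
Proof. by rewrite brD -[- y]scaleN1r brZ scaleN1r. Qed.
Lemma blsum (I : Type) (r : seq I) (f : I -> A) z :
  m (\sum_(i <- r) f i) z = \sum_(i <- r) m (f i) z.
Proof. by apply: (big_morph (fun x => m x z)) => [x y|]; rewrite ?blD ?bl0. Qed.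
Lemma brsum (I : Type) (r : seq I) (f : I -> A) z :
  m z (\sum_(i <- r) f i) = \sum_(i <- r) m z (f i).
Proof. by apply: (big_morph (fun x => m z x)) => [x y|]; rewrite ?brD ?br0. Qed.
Lemma master (I J : Type) (r : seq I) (r' : seq J) f u g v :
  m (\sum_(p <- r) f p *: u p) (\sum_(q <- r') g q *: v q) =
  \sum_(p <- r) \sum_(q <- r') (f p * g q) *: m (u p) (v q).
Proof.
rewrite blsum; apply: eq_bigr => p _; rewrite blZ brsum scaler_sumr.
by apply: eq_bigr => q _; rewrite brZ scalerA.
Qed.
End Bil.

Section BS.
Variables (B : A -> A -> F) (s : seq (A * A)).
Hypothesis HB : bilinear_map (B : A -> A -> F^o).
Hypothesis Hskew : forall x y, B x y = - B y x.
Hypothesis Hnd : forall x, (forall y, B x y = 0) -> x = 0.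
Hypothesis Hsym : symmetric_tensor s.

Lemma BlZ a x z : B (a *: x) z = a * B x z. Proof. exact: (blZ HB). Qed.
Lemma BrZ a x z : B z (a *: x) = a * B z x. Proof. exact: (brZ HB). Qed.
Lemma BlD x y z : B (x + y) z = B x z + B y z. Proof. exact: (blD HB). Qed.
Lemma BrD x y z : B z (x + y) = B z x + B z y. Proof. exact: (brD HB). Qed.
Lemma BlB x y z : B (x - y) z = B x z - B y z. Proof. exact: (blB HB). Qed.
Lemma BrB x y z : B z (x - y) = B z x - B z y. Proof. exact: (brB HB). Qed.
Lemma Blsum (I : Type) (r : seq I) (f : I -> A) z :
  B (\sum_(i <- r) f i) z = \sum_(i <- r) B (f i) z.
Proof. exact: (blsum HB). Qed.
Lemma Brsum (I : Type) (r : seq I) (f : I -> A) z :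
  B z (\sum_(i <- r) f i) = \sum_(i <- r) B z (f i).
Proof. exact: (brsum HB). Qed.

Definition P x := \sum_(p <- s) B x p.1 *: p.2.

Lemma pairing_phi x v : pairing (phiB B x) v = B x v.
Proof.
rewrite {2}(row_sum_delta v) Brsum /pairing; apply: eq_bigr => j _.
by rewrite mxE BrZ mulrC.
Qed.

Lemma rt_phi x : rtilde s (phiB B x) = P x.
Proof. by rewrite /rtilde; apply: eq_bigr => p _; rewrite pairing_phi. Qed.

Lemma nd2 v : (forall z, B z v = 0) -> v = 0.
Proof. by move=> H; apply: Hnd => y; rewrite Hskew H oppr0. Qed.

Lemma key (u w : A) (f g : A * A -> A) :
  \sum_(p <- s) pairing u (f p) * pairing w (g p) =
  \sum_i \sum_k u 0 i * w 0 k * (\sum_(p <- s) tens2 (f p) (g p)) i k.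
Proof.
rewrite /pairing.
under eq_bigr do rewrite big_distrl.
under eq_bigr do under eq_bigr do rewrite big_distrr.
rewrite exchange_big; apply: eq_bigr => i _.
rewrite exchange_big; apply: eq_bigr => k _.
rewrite summxE mulr_sumr; apply: eq_bigr => p _.
rewrite mxE /=; ring.
Qed.

Lemma SymB x z : \sum_(p <- s) B x p.1 * B z p.2 = \sum_(p <- s) B x p.2 * B z p.1.
Proof.
have := key (phiB B x) (phiB B z) fst snd.
have := key (phiB B x) (phiB B z) snd fst.
rewrite /= -Hsym => <-.
under eq_bigr do rewrite !pairing_phi.
move=> ->; by under eq_bigr do rewrite !pairing_phi.
Qed.

Lemma Psym x : P x = \sum_(p <- s) B x p.2 *: p.1.
Proof.
apply/eqP; rewrite -subr_eq0; apply/eqP; apply: nd2 => w.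
rewrite BrB /P !Brsum.
under eq_bigr do rewrite BrZ.
under [X in _ - X]eq_bigr do rewrite BrZ.
by rewrite SymB subrr.
Qed.

Lemma Pself z w : B z (P w) = B w (P z).
Proof.
rewrite /P !Brsum.
under eq_bigr do rewrite BrZ.
under [RHS]eq_bigr do rewrite BrZ.
rewrite SymB; apply: eq_bigr => p _; exact: mulrC.
Qed.

Lemma Plin a x y : P (a *: x + y) = a *: P x + P y.
Proof.
rewrite /P scaler_sumr -big_split; apply: eq_bigr => p _ /=.
by rewrite BlD BlZ scalerDl scalerA.
Qed.

Section M.
Variable (m : A -> A -> A) (Hm : bilinear_map m).

Lemma BM (I J : Type) (r : seq I) (r' : seq J) f u g v w :
  B w (m (\sum_(p <- r) f p *: u p) (\sum_(q <- r') g q *: v q)) =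
  \sum_(p <- r) \sum_(q <- r') f p * g q * B w (m (u p) (v q)).
Proof.
rewrite (master Hm) Brsum; apply: eq_bigr => p _.
by rewrite Brsum; apply: eq_bigr => q _; rewrite BrZ.
Qed.

Lemma S1 x y z : \sum_(p <- s) \sum_(q <- s) B x p.1 * B y q.1 * B z (m p.2 q.2)
  = B z (m (P x) (P y)).
Proof. by rewrite /P BM. Qed.

Lemma S2 x y z : \sum_(p <- s) \sum_(q <- s) B x p.1 * B y (m p.2 q.1) * B z q.2
  = B y (m (P x) (P z)).
Proof.
rewrite (Psym z) /P BM; apply: eq_bigr => p _; apply: eq_bigr => q _; ring.
Qed.

Lemma S3 x y z : \sum_(p <- s) \sum_(q <- s) B x (m p.1 q.1) * B y q.2 * B z p.2
  = B x (m (P z) (P y)).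
Proof.
rewrite (Psym z) (Psym y) BM; apply: eq_bigr => p _; apply: eq_bigr => q _; ring.
Qed.

Lemma S4 x y z : \sum_(p <- s) \sum_(q <- s) B x (m q.1 p.1) * B y q.2 * B z p.2
  = B x (m (P y) (P z)).
Proof.
rewrite (Psym z) (Psym y) BM exchange_big; apply: eq_bigr => p _; apply: eq_bigr => q _; ring.
Qed.

Lemma S5 x y z : \sum_(p <- s) \sum_(q <- s) B x (m p.1 q.1) * B y p.2 * B z q.2
  = B x (m (P y) (P z)).
Proof.
rewrite (Psym z) (Psym y) BM; apply: eq_bigr => p _; apply: eq_bigr => q _; ring.
Qed.

Lemma S6 x y z : \sum_(p <- s) \sum_(q <- s) B x (m q.1 p.1) * B y p.2 * B z q.2
  = B x (m (P z) (P y)).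
Proof.
rewrite (Psym z) (Psym y) BM exchange_big; apply: eq_bigr => p _; apply: eq_bigr => q _; ring.
Qed.

End M.

Definition E (T : {ffun 'I_n * 'I_n * 'I_n -> F}) (u v w : A) : F :=
  \sum_i \sum_j \sum_k T (i, j, k) * (u 0 i * v 0 j * w 0 k).

Lemma E_tens3 a b c u v w :
  E (tens3 a b c) u v w = pairing u a * pairing v b * pairing w c.
Proof.
rewrite /E /pairing -mulrA mulr_suml; apply: eq_bigr => i _ /=.
rewrite mulr_suml mulr_sumr; apply: eq_bigr => j _ /=.
rewrite !mulr_sumr; apply: eq_bigr => k _ /=.
rewrite ffunE /=; ring.
Qed.

Lemma E_D T1 T2 u v w : E (T1 + T2) u v w = E T1 u v w + E T2 u v w.
Proof.
rewrite /E -big_split; apply: eq_bigr => i _ /=.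
rewrite -big_split; apply: eq_bigr => j _ /=.
rewrite -big_split; apply: eq_bigr => k _ /=.
by rewrite ffunE mulrDl.
Qed.

Lemma E_0 u v w : E 0 u v w = 0.
Proof.
rewrite /E big1 // => i _; rewrite big1 // => j _; rewrite big1 // => k _.
by rewrite ffunE mul0r.
Qed.

Lemma E_N T u v w : E (- T) u v w = - E T u v w.
Proof.
apply: (addrI (E T u v w)); rewrite -E_D !subrr; exact: E_0.
Qed.

Lemma E_B T1 T2 u v w : E (T1 - T2) u v w = E T1 u v w - E T2 u v w.
Proof. by rewrite E_D E_N. Qed.

Lemma E_sum (I : Type) (r : seq I) (f : I -> {ffun 'I_n * 'I_n * 'I_n -> F}) u v w :
  E (\sum_(i <- r) f i) u v w = \sum_(i <- r) E (f i) u v w.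
Proof. by apply: (big_morph (fun T => E T u v w)) => [x y|]; rewrite ?E_D ?E_0. Qed.

Lemma ev a i : ('e_a : A) 0 i = (i == a)%:R.
Proof. by rewrite mxE eqxx. Qed.

Lemma E_e T a b c : E T 'e_a 'e_b 'e_c = T (a, b, c).
Proof.
rewrite /E (bigD1 a) //= [X in _ + X]big1 ?addr0; last first.
  by move=> i nia; apply: big1 => j _; apply: big1 => k _; rewrite ev (negbTE nia) !mul0r mulr0.
rewrite (bigD1 b) //= [X in _ + X]big1 ?addr0; last first.
  by move=> j njb; apply: big1 => k _; rewrite [_ 'e_b _ _]ev (negbTE njb) mulr0 mul0r mulr0.
rewrite (bigD1 c) //= [X in _ + X]big1 ?addr0; last first.
  by move=> k nkc; rewrite [_ 'e_c _ _]ev (negbTE nkc) !mulr0.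
by rewrite !ev !eqxx !mulr1.
Qed.

Definition Mphi : 'M[F]_n := \matrix_(i, j) B 'e_i 'e_j.

Lemma phiM x : phiB B x = x *m Mphi.
Proof.
apply/rowP => j; rewrite !mxE {1}(row_sum_delta x) Blsum; apply: eq_bigr => i _.
by rewrite BlZ mxE.
Qed.

Lemma phi_inj x : phiB B x = 0 -> x = 0.
Proof.
move=> H; apply: Hnd => y; rewrite -pairing_phi H /pairing big1 // => j _.
by rewrite mxE mul0r.
Qed.

Lemma Munit : Mphi \in unitmx.
Proof.
rewrite -row_free_unit -kermx_eq0; apply/eqP/row_matrixP => i; rewrite row0.
by apply: phi_inj; rewrite phiM -row_mul mulmx_ker row0.
Qed.

Lemma phi_surj u : exists x, phiB B x = u.
Proof. by exists (u *m invmx Mphi); rewrite phiM mulmxKV // Munit. Qed.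

Lemma tens_zero T :
  (forall x y z, E T (phiB B x) (phiB B y) (phiB B z) = 0) -> T = 0.
Proof.
move=> H; apply/ffunP => [[[a b] c]]; rewrite ffunE -E_e.
case: (phi_surj 'e_a) => x <-; case: (phi_surj 'e_b) => y <-.
by case: (phi_surj 'e_c) => z <-; apply: H.
Qed.

Lemma EP (m : A -> A -> A) (Hm : bilinear_map m) x y z :
  E (PLYBE_P m s) (phiB B x) (phiB B y) (phiB B z) =
  B z (m (P x) (P y)) - B y (m (P x) (P z)) + (B x (m (P z) (P y)) - B x (m (P y) (P z))).
Proof.
rewrite /PLYBE_P E_sum.
under eq_bigr do rewrite E_sum.
under eq_bigr do under eq_bigr do rewrite E_D E_B !E_tens3 !pairing_phi BrB mulrBl mulrBl.
under eq_bigr do rewrite big_split sumrB sumrB /=.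
rewrite big_split sumrB sumrB /=.
by rewrite (S1 Hm) (S2 Hm) (S3 Hm) (S4 Hm).
Qed.

Lemma EL (m : A -> A -> A) (Hm : bilinear_map m) x y z :
  E (PLYBE_L m s) (phiB B x) (phiB B y) (phiB B z) =
  B z (m (P x) (P y)) + B y (m (P x) (P z)) - (B x (m (P y) (P z)) + B x (m (P z) (P y))).
Proof.
rewrite /PLYBE_L E_sum.
under eq_bigr do rewrite E_sum.
under eq_bigr do under eq_bigr do rewrite E_B E_D !E_tens3 !pairing_phi BrD mulrDl mulrDl.
under eq_bigr do rewrite sumrB big_split big_split /=.
rewrite sumrB big_split big_split /=.
by rewrite (S1 Hm) (S2 Hm) (S5 Hm) (S6 Hm).
Qed.

Lemma Br0 z : B z 0 = 0. Proof. exact: (br0 HB). Qed.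

Lemma RBc (m : A -> A -> A)
  (Hinv : forall x y z, B (m x y) z = B x (m y z - m z y)) x y z :
  B z (m (P x) (P y) - P (m (P x) y + m x (P y))) =
  B z (m (P x) (P y)) - B y (m (P x) (P z)) + (B x (m (P z) (P y)) - B x (m (P y) (P z))).
Proof.
rewrite BrB Pself BlD !Hinv [B y (m _ _)]Hskew Hinv !BrB; ring.
Qed.

Lemma RBl (m : A -> A -> A)
  (Hinv : forall x y z, B (m x y) z = B x (m y z + m z y)) x y z :
  B z (m (P x) (P y) - P (m (P x) y + m x (P y))) =
  B z (m (P x) (P y)) + B y (m (P x) (P z)) - (B x (m (P y) (P z)) + B x (m (P z) (P y))).
Proof.
rewrite BrB Pself BlD !Hinv [B y (m _ _)]Hskew Hinv !BrD; ring.
Qed.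

Lemma main_sec circ br : bilinear_map circ -> bilinear_map br ->
  (forall x y z, B (circ x y) z = B x (circ y z - circ z y)) ->
  (forall x y z, B (br x y) z = B x (br y z + br z y)) ->
  PLYBE_solution circ br s <-> Rota_Baxter circ br (fun x => rtilde s (phiB B x)).
Proof.
move=> Hc Hb Hic Hib; split.
- move=> [HP HL]; split; [|split].
  + by move=> a x y; rewrite !rt_phi; exact: Plin.
  + move=> x y; rewrite !rt_phi; apply/eqP; rewrite -subr_eq0; apply/eqP.
    by apply: nd2 => z; rewrite (RBc Hic) -(EP Hc) HP E_0.
  + move=> x y; rewrite !rt_phi; apply/eqP; rewrite -subr_eq0; apply/eqP.
    by apply: nd2 => z; rewrite (RBl Hib) -(EL Hb) HL E_0.
- move=> [_ [Hrc Hrb]]; split.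
  + apply: tens_zero => x y z; rewrite (EP Hc) -(RBc Hic).
    by have := Hrc x y; rewrite !rt_phi => ->; rewrite subrr Br0.
  + apply: tens_zero => x y z; rewrite (EL Hb) -(RBl Hib).
    by have := Hrb x y; rewrite !rt_phi => ->; rewrite subrr Br0.
Qed.

End BS.
End Aux.

Theorem proposition3p24 (F : fieldType) (n : nat)
  (circ br : 'rV[F]_n -> 'rV[F]_n -> 'rV[F]_n) (B : 'rV[F]_n -> 'rV[F]_n -> F)
  (s : seq ('rV[F]_n * 'rV[F]_n)) :
  [pchar F] =i pred0 ->
  dual_pre_Poisson circ br ->
  quadratic circ br B ->
  symmetric_tensor s ->
  (PLYBE_solution circ br s <->
   Rota_Baxter circ br (fun x => rtilde s (phiB B x))).
Proof.
move=> _ [Hc [Hb _]] [HB [Hs [Hn [Hic Hib]]]] Hsym.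
exact: (main_sec HB Hs Hn Hsym Hc Hb Hic Hib).
Qed.
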